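(* Assume $\mathbf a,\mathbf b\in\Delta^n$ with strictly positive entries. Then the problem $\min_{X\in\mathbb{R}^{n\times n}_+}f(X)$ admits an optimal solution $X_f$ such that $$\|X_f\mathbf 1_n-\mathbf a\|_1+\|X_f^\top\mathbf 1_n-\mathbf b\|_1\le\frac{2n\|C\|_\infty}{\tau}.$$
   Context: Let $n\ge1$, $C\in\mathbb{R}^{n\times n}$ with nonnegative entries and $\|C\|_\infty=\max_{i,j}|C_{ij}|$; $\tau>0$; $\Delta^n=\{\mathbf x\in\mathbb{R}^n_+:\sum_i x_i=1\}$. For $\mathbf x\in\mathbb{R}^n_+$ and $\mathbf y$ with positive entries, $\mathbf{KL}(\mathbf x\|\mathbf y)=\sum_i x_i\log(x_i/y_i)-x_i+y_i$ (with $0\log0=0$). $\mathbf 1_n$ is the all-ones vector. $f(X)=\langle C,X\rangle+\tau\mathbf{KL}(X\mathbf 1_n\|\mathbf a)+\tau\mathbf{KL}(X^\top\mathbf 1_n\|\mathbf b)$ for $X\in\mathbb{R}^{n\times n}_+$. *)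

(* Defs.v *)
From mathcomp Require Import all_boot all_order all_algebra.
From mathcomp Require Import all_classical all_reals all_analysis.
Set Implicit Arguments. Unset Strict Implicit. Unset Printing Implicit Defensive.
Import Order.TTheory GRing.Theory Num.Theory.
Local Open Scope ring_scope.

(* With mathcomp-analysis' ln, ln 0 = 0, so the term x_i * ln(x_i/y_i) is 0
   when x_i = 0, matching the convention 0 log 0 = 0. *)
Definition KL (R : realType) (n : nat) (x y : 'I_n -> R) : R :=
  \sum_(i < n) (x i * ln (x i / y i) - x i + y i).

Definition rowsum (R : realType) (n : nat) (X : 'M[R]_n) : 'I_n -> R :=
  fun i => \sum_(j < n) X i j.
Definition colsum (R : realType) (n : nat) (X : 'M[R]_n) : 'I_n -> R :=
  fun j => \sum_(i < n) X i j.

Definition nonneg_mx (R : realType) (n : nat) (X : 'M[R]_n) : Prop :=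
  forall i j, 0 <= X i j.

Definition frob (R : realType) (n : nat) (C X : 'M[R]_n) : R :=
  \sum_(i < n) \sum_(j < n) C i j * X i j.

Definition mx_maxabs (R : realType) (n : nat) (C : 'M[R]_n) : R :=
  \big[Num.max/0]_(i < n) \big[Num.max/0]_(j < n) `|C i j|.

Definition l1 (R : realType) (n : nat) (x : 'I_n -> R) : R :=
  \sum_(i < n) `|x i|.

Definition fobj (R : realType) (n : nat) (C : 'M[R]_n) (tau : R)
  (a b : 'I_n -> R) (X : 'M[R]_n) : R :=
  frob C X + tau * KL (rowsum X) a + tau * KL (colsum X) b.

Definition in_simplex (R : realType) (n : nat) (x : 'I_n -> R) : Prop :=
  (forall i, 0 <= x i) /\ \sum_(i < n) x i = 1.

(* Main.v *)
Require Import Defs.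
From mathcomp Require Import all_boot all_order all_algebra.
From mathcomp Require Import all_classical all_reals all_analysis.
From mathcomp Require Import ring lra.
Import Order.TTheory GRing.Theory Num.Theory.
Import numFieldNormedType.Exports.
Local Open Scope classical_set_scope.
Local Open Scope ring_scope.

Section S.
Variable R : realType.
Implicit Types x y a : R.

Lemma ln_le_sub1 {z : R} : 0 < z -> ln z <= z - 1.
Proof.
move=> z0; have := @le_ln1Dx R (z - 1).
have -> : 1 + (z - 1) = z by ring.
by apply; lra.
Qed.

Lemma xlnle {x y} : 0 < x -> 0 < y -> x * ln (y / x) <= y - x.
Proof.
move=> x0 y0; have h := ln_le_sub1 (divr_gt0 y0 x0).
have -> : y - x = x * (y / x - 1) by field; rewrite lt0r_neq0.
by rewrite ler_pM2l.
Qed.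

Definition g a x := x * ln (x / a) - x + a.

Lemma g0 a : g a 0 = a.
Proof. by rewrite /g mul0r subr0 add0r. Qed.

Lemma g_diff {a x y} : 0 < a -> 0 <= x -> 0 < y ->
  g a y - g a x <= (y - x) * ln (y / a).
Proof.
move=> a0 x0 y0; rewrite /g.
have [->|xp] := eqVneq x 0.
  rewrite mul0r !subr0; lra.
have xpos : 0 < x by rewrite lt0r xp.
have e : ln (y / a) = ln (y / x) + ln (x / a).
  have xn : x != 0 by rewrite lt0r_neq0.
  have an : a != 0 by rewrite lt0r_neq0.
  by rewrite -lnM ?posrE ?divr_gt0 //; congr ln; field; rewrite ?xn ?an.
have := xlnle xpos y0; rewrite e; lra.
Qed.

Lemma g_ge0 a x : 0 < a -> 0 <= x -> 0 <= g a x.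
Proof.
move=> a0 x0; have [->|xp] := eqVneq x 0; first by rewrite g0 ltW.
have xpos : 0 < x by rewrite lt0r xp.
have := xlnle xpos a0.
have -> : ln (a / x) = - ln (x / a).
  rewrite -lnV ?posrE ?divr_gt0 //; congr ln; rewrite invf_div //.
rewrite /g; lra.
Qed.


Lemma sq_bound {y} : 0 < y -> y <= 1 -> (y * ln y)^+2 <= 2 * y.
Proof.
move=> y0 y1.
have L0 : 0 <= - ln y by rewrite oppr_ge0 ln_le0.
have := expR_ge1Dxn 1 L0.
rewrite expRN lnK ?posrE // => h.
have hw : y * y^-1 = 1 by rewrite mulfV // lt0r_neq0.
move: h; set w := y^-1; set L := ln y => h.
have : y^+2 * (1 + (- L) ^+ 2 / 2`!%:R) <= y^+2 * w.
  by rewrite ler_pM2l // exprn_gt0.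
rewrite /= (_ : 2`!%:R = 2 :> R); last by rewrite /factorial /=.
have -> : y^+2 * w = y by rewrite expr2 -mulrA hw mulr1.
move=> h2; have -> : (y * L)^+2 = 2 * (y^+2 * ((- L)^+2 / 2)) by rewrite sqrrN; field.
have : 0 <= y^+2 by rewrite sqr_ge0.
nra.
Qed.

Lemma cont_h a : 0 < a -> continuous (fun x : R => x * ln (x / a)).
Proof.
move=> a0 x.
have [xn|x0|->] := ltgtP x 0.
- have hx : x / a <= 0 by rewrite pmulr_lle0 ?invr_gt0 // ltW.
  apply: (cvg_near_cst (x * ln (x / a))).
  have := @near_in_itvNyo R 0 x; rewrite in_itv /= => /(_ xn).
  apply: filterS => y; rewrite in_itv /= => yn.
  by rewrite (ln0 hx) ln0 ?mulr0 // pmulr_lle0 ?invr_gt0 // ltW.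
- apply: (continuousM (s:=id) (t:=fun y => ln (y / a)) (x:=x)); first exact: cvg_id.
  have h1 : {for x, continuous (fun y : R => y / a)}.
    by apply: cvgMr_tmp; exact: cvg_id.
  have h2 : {for (x / a), continuous (@ln R)}.
    by apply: continuous_ln; rewrite divr_gt0.
  exact: (continuous_comp h1 h2).
- apply/cvgrPdist_le => e e0.
  set d := Num.min 1 (Num.min (e^+2 / 8) (e / (2 * (`|ln a| + 1)))).
  have d0 : 0 < d.
    have h1 : 0 < e^+2 / 8 by rewrite divr_gt0 ?exprn_gt0.
    have h2 : 0 < e / (2 * (`|ln a| + 1)).
      by rewrite divr_gt0 // mulr_gt0 // ltr_wpDl.
    by rewrite /d !lt_min ltr01 h1 h2.
  suff key : forall y : R, `|y| < d -> `|0 * ln (0 / a) - y * ln (y / a)| <= e.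
    exact: (filterS key (nbhs0_lt d0)).
  move=> y yd.
  rewrite mul0r sub0r normrN.
  have [yn|yp] := leP y 0.
    rewrite ln0; first by rewrite mulr0 normr0 ltW.
    by rewrite mulr_le0_ge0 // invr_ge0 ltW.
  have d1 : d <= 1 by rewrite /d ge_min lexx.
  have d2 : d <= e^+2 / 8 by rewrite /d !ge_min lexx orbT.
  have d3 : d <= e / (2 * (`|ln a| + 1)) by rewrite /d !ge_min lexx !orbT.
  have yd' : y < d by rewrite -(gtr0_norm yp).
  have y1 : y <= 1 by lra.
  have sb := sq_bound yp y1.
  rewrite ln_div ?posrE // mulrBr.
  have Lneg : y * ln y <= 0 by rewrite pmulr_rle0 // ln_le0.
  have la : y * `|ln a| <= e / 2.
    have hh : (`|ln a| + 1) * d <= e / 2.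
      have cp : 0 < `|ln a| + 1 by rewrite ltr_wpDl.
      have -> : e / 2 = (`|ln a| + 1) * (e / (2 * (`|ln a| + 1))).
        by field; rewrite lt0r_neq0.
      by rewrite ler_pM2l.
    apply: le_trans hh; rewrite mulrC ler_pM //; lra.
  have yl : - (y * ln y) <= e / 2.
    have : (y * ln y) ^+ 2 <= (e/2)^+2 by apply: (le_trans sb); lra.
    move=> hs; have e2 : 0 < e / 2 by rewrite divr_gt0.
    move: hs Lneg e2; set z := y * ln y; nra.
  apply: le_trans (ler_normB _ _) _.
  rewrite ler0_norm // normrM (gtr0_norm yp); lra.
Qed.


Lemma cont_g a : 0 < a -> continuous (g a).
Proof.
move=> a0 x; rewrite /g.
apply: cvgD; last exact: cvg_cst.
apply: cvgB; last exact: cvg_id.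
exact: cont_h.
Qed.

Section C.
Variable T : topologicalType.
Lemma cD (f h : T -> R) : continuous f -> continuous h -> continuous (fun v => f v + h v).
Proof. move=> hf hh x; exact: (cvgD (hf x) (hh x)). Qed.
Lemma cMl (c : R) (f : T -> R) : continuous f -> continuous (fun v => c * f v).
Proof. move=> hf x; apply: cvgMl_tmp; exact: hf. Qed.
Lemma cComp (f : T -> R) (k : R -> R) : continuous f -> continuous k -> continuous (fun v => k (f v)).
Proof. move=> hf hh x; exact: (continuous_comp (hf x) (hh (f x))). Qed.
Lemma cSum (I : Type) (s : seq I) (F : I -> T -> R) :
  (forall i, continuous (F i)) -> continuous (fun v => \sum_(i <- s) F i v).
Proof.
move=> hF; elim: s => [|x s IH].
  have -> : (fun v : T => \sum_(i <- [::]) F i v) = (fun=> 0) by apply/funext => v; rewrite big_nil.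
  by move=> x; exact: cvg_cst.
have -> : (fun v : T => \sum_(i <- x :: s) F i v) = (fun v => F x v + \sum_(i <- s) F i v).
  by apply/funext => v; rewrite big_cons.
exact: cD.
Qed.
End C.

Lemma cont_F n (C : 'M[R]_n) (tau : R) (a b : 'I_n -> R) :
  (forall i, 0 < a i) -> (forall j, 0 < b j) ->
  continuous (fun v : 'rV[R]_(n * n) => fobj C tau a b (vec_mx v)).
Proof.
move=> ha hb.
have ce : forall i j, continuous (fun v : 'rV[R]_(n * n) => vec_mx v i j).
  move=> i j.
  have -> : (fun v : 'rV[R]_(n * n) => vec_mx v i j) = (fun v => v 0 (mxvec_index i j)).
    by apply/funext => v; rewrite mxE.
  exact: coord_continuous.
rewrite /fobj /frob /KL /rowsum /colsum.
apply: cD; first apply: cD.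
- apply: cSum => i; apply: cSum => j; exact: cMl.
- apply: cMl; apply: cSum => i.
  apply: (@cComp _ _ (g (a i))); last exact: cont_g.
  by apply: cSum => j.
- apply: cMl; apply: cSum => j.
  apply: (@cComp _ _ (g (b j))); last exact: cont_g.
  by apply: cSum => i.
Qed.


Lemma g_big {a r} : 0 < a -> a <= 1 -> expR 3 < r -> 2 < g a r.
Proof.
move=> a0 a1 rM.
have e4 : 4 <= expR 3 :> R by have := expR_ge1Dx (3 : R); lra.
have r0 : 0 < r by lra.
have l3 : 3 < ln r by rewrite -(expRK 3) ltr_ln ?posrE ?expR_gt0.
have lra' : ln r <= ln (r / a).
  rewrite ler_ln ?posrE ?divr_gt0 // ler_pdivlMr //; nra.
rewrite /g.
have : r * 3 <= r * ln (r / a) by rewrite ler_pM2l //; lra.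
nra.
Qed.

Lemma fobj0 n (C : 'M[R]_n) tau (a b : 'I_n -> R) :
  \sum_i a i = 1 -> \sum_i b i = 1 -> fobj C tau a b 0 = 2 * tau.
Proof.
move=> sa sb.
have K0 : forall (x c : 'I_n -> R), (forall i, x i = 0) -> \sum_i c i = 1 -> KL x c = 1.
  move=> x c hx hc; rewrite /KL -hc; apply: eq_bigr => i _.
  by rewrite hx mul0r subr0 add0r.
have r0 : forall i, rowsum (0 : 'M[R]_n) i = 0.
  by move=> i; rewrite /rowsum big1 // => j _; rewrite mxE.
have c0 : forall i, colsum (0 : 'M[R]_n) i = 0.
  by move=> i; rewrite /colsum big1 // => j _; rewrite mxE.
have f0 : frob C 0 = 0.
  by rewrite /frob big1 // => i _; rewrite big1 // => j _; rewrite mxE mulr0.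
rewrite /fobj (K0 _ _ r0 sa) (K0 _ _ c0 sb) f0; lra.
Qed.

Lemma fobj_lb n (C : 'M[R]_n) tau (a b : 'I_n -> R) (Y : 'M[R]_n) i :
  (forall i j, 0 <= C i j) -> 0 < tau -> (forall i, 0 < a i) -> (forall j, 0 < b j) ->
  nonneg_mx Y -> tau * g (a i) (rowsum Y i) <= fobj C tau a b Y.
Proof.
move=> hC t0 ha hb hY.
have fr : 0 <= frob C Y by apply: sumr_ge0 => k _; apply: sumr_ge0 => l _; rewrite mulr_ge0.
have kb : 0 <= KL (colsum Y) b.
  by apply: sumr_ge0 => k _; apply: g_ge0 => //; apply: sumr_ge0.
have ka : g (a i) (rowsum Y i) <= KL (rowsum Y) a.
  rewrite /KL (bigD1 i) //= lerDl.
  by apply: sumr_ge0 => k _; apply: g_ge0 => //; apply: sumr_ge0.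
rewrite /fobj.
have : tau * g (a i) (rowsum Y i) <= tau * KL (rowsum Y) a by rewrite ler_pM2l.
have : 0 <= tau * KL (colsum Y) b by rewrite mulr_ge0 // ltW.
lra.
Qed.

Lemma exists_min n (C : 'M[R]_n) (tau : R) (a b : 'I_n -> R) :
  (forall i j, 0 <= C i j) -> 0 < tau ->
  in_simplex a -> in_simplex b ->
  (forall i, 0 < a i) -> (forall i, 0 < b i) ->
  exists X : 'M[R]_n, nonneg_mx X /\
    (forall Y : 'M[R]_n, nonneg_mx Y -> fobj C tau a b X <= fobj C tau a b Y).
Proof.
move=> hC t0 [_ sa] [_ sb] ha hb.
set M := expR 3 : R.
have M0 : 0 <= M by rewrite ltW // expR_gt0.
pose K := [set v : 'rV[R]_(n * n) | forall k, `[0, M]%classic (v ord0 k)].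
have Kc : compact K.
  by apply: (@rV_compact _ _ (fun=> `[0, M]%classic)) => _; exact: segment_compact.
have K0 : K 0.
  by move=> k; rewrite /= mxE in_itv /= lexx.
have Kn : K !=set0 by exists 0.
have cw : {within K, continuous (fun v : 'rV[R]_(n * n) => fobj C tau a b (vec_mx v))}.
  by apply: continuous_subspaceT; exact: cont_F.
have [c cK cmin] := compact_EVT_min Kn Kc cw.
move: cK; rewrite inE => cK.
exists (vec_mx c); split.
  move=> i j; rewrite mxE; have := cK (mxvec_index i j); rewrite /= in_itv /=.
  by case/andP.
move=> Y hY.
have cm0 : fobj C tau a b (vec_mx c) <= 2 * tau.
  rewrite -(@fobj0 n C tau a b sa sb).
  have -> : (0 : 'M[R]_n) = vec_mx 0 by rewrite linear0.
  by apply: cmin; rewrite inE.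
case: (boolP [forall i, forall j, Y i j <= M]) => [/forallP hall|/forallPn [i /forallPn [j hij]]].
  have -> : fobj C tau a b Y = fobj C tau a b (vec_mx (mxvec Y)) by rewrite mxvecK.
  apply: cmin; rewrite inE => k /=.
  case/mxvec_indexP: k => i j; rewrite mxvecE in_itv /= hY /=.
  by have /forallP := hall i; apply.
apply: (le_trans cm0); apply: ltW.
apply: (lt_le_trans _ (@fobj_lb n C tau a b Y i hC t0 ha hb hY)).
have a1 : a i <= 1.
  by rewrite -sa (bigD1 i) //= lerDl; apply: sumr_ge0 => k _; apply: ltW.
have rM : M < rowsum Y i.
  rewrite /rowsum (bigD1 j) //=.
  have : 0 <= \sum_(k < n | k != j) Y i k by apply: sumr_ge0.
  rewrite -ltNge in hij; lra.
have := g_big (ha i) a1 rM.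
move=> h; rewrite -[2 * tau]mulrC; rewrite ltr_pM2l //.
Qed.


Lemma g_scale {a r t} : 0 < a -> 0 <= r -> 0 < t ->
  g a (t * r) - g a r <= (t - 1) * (r * ln (t * r / a)).
Proof.
move=> a0 r0 t0; have [->|rp] := eqVneq r 0.
  by rewrite !(mulr0, mul0r) subrr.
have rpos : 0 < r by rewrite lt0r rp.
have := g_diff a0 r0 (mulr_gt0 t0 rpos).
have -> : (t * r - r) * ln (t * r / a) = (t - 1) * (r * ln (t * r / a)) by ring.
done.
Qed.

Lemma gibbs {a r m t} : 0 < a -> 0 <= r -> 0 < m -> 0 < t ->
  r * ln (t * m) + r - m * a <= r * ln (t * r / a).
Proof.
move=> a0 r0 m0 t0; have [->|rp] := eqVneq r 0.
  rewrite !mul0r add0r sub0r oppr_le0; exact: ltW (mulr_gt0 m0 a0).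
have rpos : 0 < r by rewrite lt0r rp.
have h := xlnle rpos (mulr_gt0 m0 a0).
have e : ln (t * m) - ln (t * r / a) = ln (m * a / r).
  have p1 : 0 < t * m by rewrite mulr_gt0.
  have p2 : 0 < t * r / a by rewrite divr_gt0 // mulr_gt0.
  rewrite -ln_div ?posrE //.
  have -> : t * m / (t * r / a) = m * a / r.
    by field; rewrite !lt0r_neq0.
  done.
have : r * ln (t * m) - r * ln (t * r / a) = r * ln (m * a / r) by rewrite -mulrBr e.
lra.
Qed.

Lemma exists_argmin (I : finType) (i0 : I) (F : I -> R) : exists i, forall k, F i <= F k.
Proof.
case: (@arg_minP _ _ I i0 xpredT F isT) => i _ h; exists i => k; exact: h.
Qed.

Lemma maxabs_ge0 n (C : 'M[R]_n) : 0 <= mx_maxabs C.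
Proof. by apply/bigmax_geP; left. Qed.

Lemma le_maxabs n (C : 'M[R]_n) i j : C i j <= mx_maxabs C.
Proof.
apply: (le_trans (ler_norm _)).
apply/bigmax_geP; right; exists i => //.
apply/bigmax_geP; right; exists j => //.
Qed.


Lemma mass_le1 n (C : 'M[R]_n) tau (a b : 'I_n -> R) (X : 'M[R]_n) :
  (forall i j, 0 <= C i j) -> 0 < tau -> in_simplex a -> in_simplex b ->
  (forall i, 0 < a i) -> (forall j, 0 < b j) ->
  nonneg_mx X -> (forall Y, nonneg_mx Y -> fobj C tau a b X <= fobj C tau a b Y) ->
  \sum_i rowsum X i <= 1.
Proof.
move=> hC t0 [_ sa] [_ sb] ha hb hX hmin.
set m := \sum_i rowsum X i.
have mc : \sum_j colsum X j = m by rewrite /m /rowsum /colsum exchange_big.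
rewrite leNgt; apply/negP => m1.
have m0 : 0 < m by lra.
set t := 2 / (m + 1).
have mp1 : 0 < m + 1 by lra.
have tp : 0 < t by rewrite divr_gt0.
have t1 : t < 1 by rewrite ltr_pdivrMr //; lra.
have tm : 1 < t * m.
  by rewrite /t mulrAC ltr_pdivlMr //; lra.
set Y := t *: X.
have hY : nonneg_mx Y by move=> i j; rewrite mxE mulr_ge0 // ltW.
have rY : forall i, rowsum Y i = t * rowsum X i.
  by move=> i; rewrite /rowsum mulr_sumr; apply: eq_bigr => j _; rewrite mxE.
have cY : forall j, colsum Y j = t * colsum X j.
  by move=> j; rewrite /colsum mulr_sumr; apply: eq_bigr => i _; rewrite mxE.
have fY : frob C Y = t * frob C X.
  rewrite /frob mulr_sumr; apply: eq_bigr => i _; rewrite mulr_sumr.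
  by apply: eq_bigr => j _; rewrite mxE mulrCA.
have rX0 : forall i, 0 <= rowsum X i by move=> i; apply: sumr_ge0.
have cX0 : forall j, 0 <= colsum X j by move=> j; apply: sumr_ge0.
set SR := \sum_i (rowsum X i * ln (t * rowsum X i / a i)).
set SC := \sum_j (colsum X j * ln (t * colsum X j / b j)).
have DR : KL (rowsum Y) a - KL (rowsum X) a <= (t - 1) * SR.
  rewrite /KL -sumrB /SR mulr_sumr; apply: ler_sum => i _; rewrite rY.
  exact: (g_scale (ha i) (rX0 i) tp).
have DC : KL (colsum Y) b - KL (colsum X) b <= (t - 1) * SC.
  rewrite /KL -sumrB /SC mulr_sumr; apply: ler_sum => j _; rewrite cY.
  exact: (g_scale (hb j) (cX0 j) tp).
set q := m * ln (t * m).
have q0 : 0 < q by rewrite mulr_gt0 // ln_gt0.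
have GR : q <= SR.
  have : \sum_i (rowsum X i * ln (t * m) + rowsum X i - m * a i) <= SR.
    by apply: ler_sum => i _; apply: gibbs.
  by rewrite sumrB big_split /= -mulr_suml -mulr_sumr sa -/m mulr1 addrK.
have GC : q <= SC.
  have : \sum_j (colsum X j * ln (t * m) + colsum X j - m * b j) <= SC.
    by apply: ler_sum => j _; apply: gibbs.
  by rewrite sumrB big_split /= -mulr_suml -mulr_sumr sb mc mulr1 addrK.
have w0 : (t - 1) * q < 0 by rewrite nmulr_rlt0 // subr_lt0.
have R1 : (t - 1) * SR <= (t - 1) * q by rewrite ler_wnM2l // subr_le0 ltW.
have R2 : (t - 1) * SC <= (t - 1) * q by rewrite ler_wnM2l // subr_le0 ltW.
have P0 : 0 <= frob C X.
  by apply: sumr_ge0 => i _; apply: sumr_ge0 => j _; rewrite mulr_ge0.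
have hm := hmin Y hY.
move: hm; rewrite /fobj fY.
set kRy := KL (rowsum Y) a; set kRx := KL (rowsum X) a.
set kCy := KL (colsum Y) b; set kCx := KL (colsum X) b.
have T1 : tau * (kRy - kRx) <= tau * ((t - 1) * q).
  by rewrite ler_pM2l //; exact: le_trans DR R1.
have T2 : tau * (kCy - kCx) <= tau * ((t - 1) * q).
  by rewrite ler_pM2l //; exact: le_trans DC R2.
have T3 : tau * ((t - 1) * q) < 0 by rewrite pmulr_rlt0.
have T4 : t * frob C X <= frob C X by rewrite ler_piMl // ltW.
nra.
Qed.


Lemma rowsum_add n (X : 'M[R]_n) i j e k :
  rowsum (X + e *: delta_mx i j) k = rowsum X k + (if k == i then e else 0).
Proof.
rewrite /rowsum.
have -> : \sum_l (X + e *: delta_mx i j) k l =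
          \sum_l X k l + \sum_l e * ((k == i) && (l == j))%:R.
  by rewrite -big_split; apply: eq_bigr => l _; rewrite !mxE.
congr (_ + _); case: (k == i) => /=.
  rewrite (bigD1 j) //= eqxx mulr1 big1 ?addr0 // => l /negbTE ->.
  by rewrite mulr0.
by apply: big1 => l _; rewrite mulr0.
Qed.

Lemma colsum_add n (X : 'M[R]_n) i j e l :
  colsum (X + e *: delta_mx i j) l = colsum X l + (if l == j then e else 0).
Proof.
rewrite /colsum.
have -> : \sum_k (X + e *: delta_mx i j) k l =
          \sum_k X k l + \sum_k e * ((k == i) && (l == j))%:R.
  by rewrite -big_split; apply: eq_bigr => k _; rewrite !mxE.
congr (_ + _); case: (l == j) => /=.
  rewrite (bigD1 i) //= eqxx mulr1 big1 ?addr0 // => k /negbTE ->.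
  by rewrite mulr0.
by apply: big1 => k _; rewrite andbF mulr0.
Qed.

Lemma frob_add n (C X : 'M[R]_n) i j e :
  frob C (X + e *: delta_mx i j) = frob C X + e * C i j.
Proof.
rewrite /frob.
have -> : \sum_k \sum_l C k l * (X + e *: delta_mx i j) k l =
   \sum_k \sum_l C k l * X k l + \sum_k \sum_l C k l * (e * ((k == i) && (l == j))%:R).
  rewrite -big_split; apply: eq_bigr => k _; rewrite -big_split; apply: eq_bigr => l _.
  by rewrite !mxE mulrDr.
congr (_ + _).
rewrite (eq_bigr (fun k => if k == i then e * C i j else 0)); last first.
  move=> k _; case hk: (k == i) => /=.
    move/eqP: hk => hk; subst k.
    rewrite (bigD1 j) //= eqxx mulr1 big1 ?addr0; first by rewrite mulrC.
    by move=> l /negbTE ->; rewrite mulr0 mulr0.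
  by apply: big1 => l _; rewrite mulr0 mulr0.
by rewrite -big_mkcond big_pred1_eq.
Qed.

Lemma KL_bump n (x y c : 'I_n -> R) i e :
  (forall k, y k = x k + (if k == i then e else 0)) ->
  KL y c - KL x c = g (c i) (x i + e) - g (c i) (x i).
Proof.
move=> hy; rewrite /KL -sumrB (bigD1 i) //= big1 ?addr0.
  by rewrite hy eqxx.
by move=> k /negbTE hk; rewrite hy hk addr0 subrr.
Qed.


Lemma pair_lb n (C : 'M[R]_n) tau (a b : 'I_n -> R) (X : 'M[R]_n) i j :
  (forall i j, 0 <= C i j) -> 0 < tau ->
  (forall i, 0 < a i) -> (forall j, 0 < b j) ->
  nonneg_mx X -> (forall Y, nonneg_mx Y -> fobj C tau a b X <= fobj C tau a b Y) ->
  expR (- (mx_maxabs C / tau)) * (a i * b j) <= rowsum X i * colsum X j.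
Proof.
move=> hC t0 ha hb hX hmin.
set th := expR (- (mx_maxabs C / tau)).
set r := rowsum X i; set c := colsum X j.
have r0 : 0 <= r by apply: sumr_ge0.
have c0 : 0 <= c by apply: sumr_ge0.
have ab0 : 0 < a i * b j by rewrite mulr_gt0.
have th0 : 0 < th by apply: expR_gt0.
rewrite leNgt; apply/negP => hlt.
set d := th * (a i * b j) - r * c.
have d0 : 0 < d by rewrite subr_gt0.
set s := r + c + 1.
have s0 : 0 < s by rewrite /s; lra.
set e := Num.min 1 (d / (2 * s)).
have e0 : 0 < e by rewrite lt_min ltr01 /= divr_gt0 // mulr_gt0.
have e1 : e <= 1 by rewrite ge_min lexx.
have e2 : e * s <= d / 2.
  have : e <= d / (2 * s) by rewrite ge_min lexx orbT.
  have -> : d / 2 = (d / (2 * s)) * s by field; rewrite lt0r_neq0.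
  by move=> h; rewrite ler_pM2r.
have hprod : (r + e) * (c + e) < th * (a i * b j).
  have : e * e <= e * 1 by rewrite ler_pM2l.
  rewrite /s in e2; rewrite /d in d0 e2; nra.
set Y := X + e *: delta_mx i j.
have hY : nonneg_mx Y.
  by move=> k l; rewrite !mxE addr_ge0 // mulr_ge0 // ltW.
have hm := hmin Y hY.
have eR : KL (rowsum Y) a - KL (rowsum X) a = g (a i) (r + e) - g (a i) r.
  by apply: KL_bump => k; rewrite rowsum_add.
have eC : KL (colsum Y) b - KL (colsum X) b = g (b j) (c + e) - g (b j) c.
  by apply: KL_bump => k; rewrite colsum_add.
have eF : frob C Y = frob C X + e * C i j by rewrite frob_add.
have re0 : 0 < r + e by lra.
have ce0 : 0 < c + e by lra.
have gR : g (a i) (r + e) - g (a i) r <= e * ln ((r + e) / a i).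
  by have := g_diff (ha i) r0 re0; rewrite (_ : r + e - r = e) //; ring.
have gC : g (b j) (c + e) - g (b j) c <= e * ln ((c + e) / b j).
  by have := g_diff (hb j) c0 ce0; rewrite (_ : c + e - c = e) //; ring.
have lsum : ln ((r + e) / a i) + ln ((c + e) / b j) < - (mx_maxabs C / tau).
  have pa : 0 < (r + e) / a i by rewrite divr_gt0.
  have pb : 0 < (c + e) / b j by rewrite divr_gt0.
  rewrite -lnM ?posrE //.
  rewrite -[X in _ < X]expRK -/th ltr_ln ?posrE ?mulr_gt0 //.
  have -> : (r + e) / a i * ((c + e) / b j) = (r + e) * (c + e) / (a i * b j).
    by field; rewrite !lt0r_neq0.
  rewrite ltr_pdivrMr //.
  1-2: by rewrite invr_gt0.
have Cle := @le_maxabs n C i j.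
have tk : tau * (mx_maxabs C / tau) = mx_maxabs C by field; rewrite lt0r_neq0.
set L1 := ln ((r + e) / a i); set L2 := ln ((c + e) / b j).
have key : e * C i j + tau * (e * L1) + tau * (e * L2) < 0.
  have : tau * (L1 + L2) < tau * (- (mx_maxabs C / tau)) by rewrite ltr_pM2l //; exact: lsum.
  rewrite mulrN tk => h.
  have : e * (C i j + tau * (L1 + L2)) < 0.
    by rewrite pmulr_rlt0 //; lra.
  move=> h2; have -> : e * C i j + tau * (e * L1) + tau * (e * L2) =
                 e * (C i j + tau * (L1 + L2)) by ring.
  done.
move: hm; rewrite /fobj eF.
have T1 : tau * (KL (rowsum Y) a - KL (rowsum X) a) <= tau * (e * L1).
  by rewrite ler_pM2l // eR.
have T2 : tau * (KL (colsum Y) b - KL (colsum X) b) <= tau * (e * L2).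
  by rewrite ler_pM2l // eC.
move: T1 T2 key; rewrite !mulrBr; lra.
Qed.


Lemma l1_bound n (x y : 'I_n -> R) al :
  (forall i, 0 <= y i) -> (forall i, al * y i <= x i) -> al <= 1 ->
  l1 (fun i => x i - y i) <= 2 * (1 - al) * \sum_i y i + (\sum_i x i - \sum_i y i).
Proof.
move=> y0 hx al1; rewrite /l1 mulr_sumr -sumrB -big_split; apply: ler_sum => i _ /=.
have := y0 i; have := hx i; rewrite ler_norml => h1 h2; apply/andP; split; nra.
Qed.

End S.

Arguments exists_min {R n C tau a b}.
Arguments mass_le1 {R n C tau a b X}.
Arguments exists_argmin {R I}.
Arguments pair_lb {R n C tau a b X}.
Arguments l1_bound {R n x y al}.
Arguments maxabs_ge0 {R n}.

Local Close Scope classical_set_scope.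

Theorem theorem2 (R : realType) (n : nat) (C : 'M[R]_n) (tau : R)
  (a b : 'I_n -> R) :
  (1 <= n)%N ->
  (forall i j, 0 <= C i j) ->
  0 < tau ->
  in_simplex a -> in_simplex b ->
  (forall i, 0 < a i) -> (forall i, 0 < b i) ->
  exists Xf : 'M[R]_n,
    nonneg_mx Xf /\
    (forall X : 'M[R]_n, nonneg_mx X -> fobj C tau a b Xf <= fobj C tau a b X) /\
    l1 (fun i => rowsum Xf i - a i) + l1 (fun j => colsum Xf j - b j)
      <= 2%:R * n%:R * mx_maxabs C / tau.
Proof.
move=> hn hC t0 sa sb ha hb.
have [X [hX hmin]] := exists_min hC t0 sa sb ha hb.
exists X; split => //; split => //.
have m1 := mass_le1 hC t0 sa sb ha hb hX hmin.
case: sa => a0 sa1; case: sb => b0 sb1.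
set m := \sum_i rowsum X i in m1.
have mc : \sum_j colsum X j = m by rewrite /m /rowsum /colsum exchange_big.
have rX0 : forall i, 0 <= rowsum X i by move=> i; apply: sumr_ge0.
have cX0 : forall j, 0 <= colsum X j by move=> j; apply: sumr_ge0.
pose i0 : 'I_n := Ordinal hn.
have [i1 hi1] := exists_argmin i0 (fun i => rowsum X i / a i).
have [j1 hj1] := exists_argmin i0 (fun j => colsum X j / b j).
set al := rowsum X i1 / a i1 in hi1.
set be := colsum X j1 / b j1 in hj1.
have Ra : forall i, al * a i <= rowsum X i by move=> i; rewrite -ler_pdivlMr // hi1.
have Rb : forall j, be * b j <= colsum X j by move=> j; rewrite -ler_pdivlMr // hj1.
have al0 : 0 <= al by rewrite divr_ge0 // ltW.
have be0 : 0 <= be by rewrite divr_ge0 // ltW.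
have al1 : al <= 1.
  have : \sum_i al * a i <= m by apply: ler_sum => i _; exact: Ra.
  by rewrite -mulr_sumr sa1 mulr1 => h; lra.
have be1 : be <= 1.
  have : \sum_j be * b j <= m by rewrite -mc; apply: ler_sum => j _; exact: Rb.
  by rewrite -mulr_sumr sb1 mulr1 => h; lra.
set k := mx_maxabs C / tau.
have k0 : 0 <= k by rewrite divr_ge0 ?maxabs_ge0 // ltW.
have hp := pair_lb i1 j1 hC t0 ha hb hX hmin.
rewrite -/k in hp.
have ab : expR (- k) <= al * be.
  have -> : al * be = (rowsum X i1 * colsum X j1) / (a i1 * b j1).
    by rewrite /al /be; field; rewrite !lt0r_neq0.
  by rewrite ler_pdivlMr // mulr_gt0.
set s := expR (- (k / 2)).
have s0 : 0 <= s by rewrite ltW // expR_gt0.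
have ss : s * s = expR (- k) by rewrite -expRD; congr expR; field.
have sab : 2 * s <= al + be.
  rewrite -ss in ab.
  have h1 : 4 * (s * s) <= (al + be) ^+ 2.
    have : 0 <= (al - be) ^+ 2 by apply: sqr_ge0.
    nra.
  rewrite leNgt; apply/negP => h2.
  have : 0 < (2 * s - (al + be)) * (2 * s + (al + be)).
    by apply: mulr_gt0; lra.
  nra.
have s1 : 1 - s <= k / 2 by have := expR_ge1Dx (- (k / 2)); rewrite -/s; lra.
have L1 := l1_bound (fun i => ltW (ha i)) Ra al1.
have L2 := l1_bound (fun j => ltW (hb j)) Rb be1.
rewrite sa1 -/m in L1; rewrite sb1 mc in L2.
have nk : k <= n%:R * k.
  by rewrite ler_peMl // ler1n.
have -> : 2%:R * n%:R * mx_maxabs C / tau = 2 * (n%:R * k) by rewrite /k; field; rewrite lt0r_neq0.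
lra.
Qed.
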